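(* Let $p\ge4$, let $\{\mu_a\}$ be a conditional design satisfying Assumption 1, and let $\theta\in\Theta$ be the true parameter with $w=\alpha+B\theta$. Let $A_1,\dots,A_n$ be i.i.d. copies of the observed subset $A$, and let $\hat\theta_n\in\Theta$ be a maximizer of the log-likelihood $l_n(\theta)=\sum_{i=1}^n\ln \mathbf{1}_{A_i}^{\top}(\alpha+B\theta)$ over $\Theta$. Then $\hat\theta_n\to\theta$ almost surely as $n\to\infty$, and consequently $\hat w_n=\alpha+B\hat\theta_n\to w$ almost surely.
   Context: A conditional design on $[p]$ is a collection $\{\mu_a\ge0: a\subseteq[p]\}$ with $\mu_a=0$ if $|a|<2$ and $\sum_{a\ni j}\mu_a=1$ for all $j\in[p]$; the observed subset $A$ is generated from $X$ with $\mathbb{P}(X=j)=w_j$ by $\mathbb{P}(A=a\mid X=j)=\mu_a\mathbb{1}\{j\in a\}$, so $\mathbb{P}(A=a)=\mu_a\mathbf{1}_a^\top w$. $\mathbf{1}_a\in\{0,1\}^p$ is the indicator vector of $a$. $\Theta=\{\theta\in\mathbb{R}^{p-1}:\theta_i\ge0,\sum_i\theta_i\le1\}$, $\alpha=(0,\dots,0,1)^\top\in\mathbb{R}^p$, $B=\begin{pmatrix}I_{p-1}\\ -\mathbf{1}^\top\end{pmatrix}\in\mathbb{R}^{p\times(p-1)}$. Assumption 1: for $u\in\mathbb{R}^{p-1}$, if $\mathbf{1}_a^\top Bu=0$ for all $a$ with $\mu_a>0$, then $u=0$. *)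

(* Defs.v *)
From HB Require Import structures.
From mathcomp Require Import all_boot all_order all_algebra.
From mathcomp Require Import all_classical all_reals all_analysis.
Set Implicit Arguments. Unset Strict Implicit. Unset Printing Implicit Defensive.
Import Order.TTheory GRing.Theory Num.Theory.
Import numFieldNormedType.Exports.
Local Open Scope classical_set_scope.
Local Open Scope ring_scope.

Section Defs.
Variable R : realType.

Definition conditional_design (p : nat) (mu : {set 'I_p} -> R) : Prop :=
  (forall a : {set 'I_p}, 0 <= mu a) /\
  (forall a : {set 'I_p}, (#|a| < 2)%N -> mu a = 0) /\
  (forall j : 'I_p, \sum_(a : {set 'I_p} | j \in a) mu a = 1).

Definition ind (p : nat) (a : {set 'I_p}) : 'cV[R]_p :=
  \col_(j < p) (j \in a)%:R.

Definition alpha (p : nat) : 'cV[R]_p := \col_(i < p) (nat_of_ord i == p.-1)%:R.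

Definition Bmx (p : nat) : 'M[R]_(p, p.-1) :=
  \matrix_(i < p, j < p.-1)
     (if (i < p.-1)%N then (nat_of_ord i == nat_of_ord j)%:R else -1).

Definition wvec (p : nat) (theta : 'cV[R]_p.-1) : 'cV[R]_p :=
  alpha p + Bmx p *m theta.

Definition indT (p : nat) (a : {set 'I_p}) (v : 'cV[R]_p) : R :=
  ((ind a)^T *m v) 0 0.

Definition Theta (p : nat) (theta : 'cV[R]_p.-1) : Prop :=
  (forall i, 0 <= theta i 0) /\ \sum_i theta i 0 <= 1.

Definition assumption1 (p : nat) (mu : {set 'I_p} -> R) : Prop :=
  forall u : 'cV[R]_p.-1,
    (forall a : {set 'I_p}, 0 < mu a -> ((ind a)^T *m Bmx p *m u) 0 0 = 0) -> u = 0.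

(* law of the observed subset: P(A = a) = mu_a 1_a^T w *)
Definition law_A (p : nat) (mu : {set 'I_p} -> R) (w : 'cV[R]_p)
  (a : {set 'I_p}) : R := mu a * indT a w.

(* A_1, A_2, ... are i.i.d. random subsets of [p] with law f:
   each event {A_i = a} is measurable, has probability f a, and the
   A_i are mutually independent (product rule over every finite family
   of distinct indices; enough for discrete variables). *)
Definition iid_subsets d (T : measurableType d) (P : probability T R)
  (p : nat) (A : nat -> T -> {set 'I_p}) (f : {set 'I_p} -> R) : Prop :=
  (forall i a, measurable [set om | A i om = a]) /\
  (forall i a, P [set om | A i om = a] = (f a)%:E) /\
  (forall (s : seq nat) (b : nat -> {set 'I_p}), uniq s ->
     fine (P [set om | forall i, i \in s -> A i om = b i]) =
     \prod_(i <- s) fine (P [set om | A i om = b i])).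

Definition eln (x : R) : \bar R := if 0 < x then (ln x)%:E else -oo%E.

Definition loglik (p : nat) (As : nat -> {set 'I_p}) (n : nat)
  (theta : 'cV[R]_p.-1) : \bar R :=
  (\sum_(i < n) eln (indT (As i) (wvec theta)))%E.

Definition is_mle (p : nat) (As : nat -> {set 'I_p}) (n : nat)
  (th : 'cV[R]_p.-1) : Prop :=
  Theta th /\ forall th', Theta th' -> (loglik As n th' <= loglik As n th)%E.

End Defs.

(* Main.v *)
Require Import Defs.
From HB Require Import structures.
From mathcomp Require Import all_boot all_order all_algebra.
From mathcomp Require Import all_classical all_reals all_analysis.
From mathcomp Require Import lra ring.
Set Implicit Arguments. Unset Strict Implicit. Unset Printing Implicit Defensive.
Import Order.TTheory GRing.Theory Num.Theory.
Import numFieldNormedType.Exports.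
Local Open Scope classical_set_scope.
Local Open Scope ring_scope.
Section S1.
Variable R : realType.

Lemma sum_inv_sq (N : nat) :
  \sum_(n < N) ((n.+1%:R : R) ^+ 2)^-1 <= 2 - 2 * (N.+1%:R)^-1.
Proof.
elim: N => [|N IH]; first by rewrite big_ord0 invr1 mulr1 subrr.
rewrite big_ord_recr /=.
apply: (le_trans (lerD IH (lexx _))).
have h1 : (0:R) < N.+1%:R by rewrite ltr0n.
have h2 : (0:R) < N.+2%:R by rewrite ltr0n.
have key : ((N.+1%:R : R) ^+ 2)^-1 <= 2 * (N.+1%:R)^-1 - 2 * (N.+2%:R)^-1.
  have -> : 2 * (N.+1%:R : R)^-1 - 2 * (N.+2%:R)^-1 = ((N.+1%:R) * (N.+2%:R) / 2)^-1.
    have e : (N.+2%:R : R) = N.+1%:R + 1 by rewrite natr1.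
    rewrite e; field.
    by apply/andP; split; apply: lt0r_neq0; move: (ler0n R N) => ?; lra.
  rewrite expr2 lef_pV2 ?posrE ?mulr_gt0 ?divr_gt0 //.
  have e : (N.+2%:R : R) = N.+1%:R + 1 by rewrite natr1.
  have h3 : (1:R) <= N.+1%:R by rewrite ler1n.
  rewrite e; move: h3; set x := N.+1%:R => h3; nra.
move: key; set a := (_ ^+ 2)^-1; set b := (N.+1%:R)^-1; set c := (N.+2%:R)^-1.
move=> key. lra.
Qed.

Local Open Scope ereal_scope.
Lemma nneseries_bounded (u : nat -> \bar R) (C : \bar R) :
  (forall n, 0 <= u n) -> (forall N, \sum_(n < N) u n <= C) ->
  \sum_(0 <= n <oo) u n <= C.
Proof.
move=> u0 uC.
apply: lime_le; first by apply: is_cvg_nneseries => n _ _; exact: u0.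
by apply: nearW => N; rewrite big_mkord; exact: uC.
Qed.
End S1.
Section Mom.
Variables (R : realType) (S : finType) (q x : S -> R).

Lemma big_tuple_cons n (F : n.+1.-tuple S -> R) :
  \sum_(t : n.+1.-tuple S) F t =
  \sum_(s : S) \sum_(t : n.-tuple S) F [tuple of s :: t].
Proof.
rewrite pair_big /=.
rewrite (reindex (fun p : S * n.-tuple S => [tuple of p.1 :: p.2])) //=.
exists (fun t : n.+1.-tuple S => (thead t, [tuple of behead t])).
  by move=> [s t] _ /=; rewrite theadE; congr pair; apply: val_inj.
by move=> t _ /=; rewrite -tuple_eta.
Qed.

Lemma big_tuple0 (F : 0.-tuple S -> R) : \sum_(t : 0.-tuple S) F t = F [tuple].
Proof. by rewrite (big_pred1 [tuple]) // => t; rewrite /= [t]tuple0; apply/esym/eqP. Qed.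

Definition wt n (t : n.-tuple S) := \prod_(i < n) q (tnth t i).
Definition Dx n (t : n.-tuple S) := \sum_(i < n) x (tnth t i).
Definition Mo n k := \sum_(t : n.-tuple S) wt t * Dx t ^+ k.
Definition Ex k := \sum_(s : S) q s * x s ^+ k.

Lemma wt_cons n s (t : n.-tuple S) : wt [tuple of s :: t] = q s * wt t.
Proof.
rewrite /wt big_ord_recl; congr (_ * _).
by apply: eq_bigr => i _; rewrite tnthS.
Qed.

Lemma Dx_cons n s (t : n.-tuple S) : Dx [tuple of s :: t] = x s + Dx t.
Proof.
rewrite /Dx big_ord_recl; congr (_ + _).
by apply: eq_bigr => i _; rewrite tnthS.
Qed.

Lemma Mo_rec n k :
  Mo n.+1 k = \sum_(j < k.+1) 'C(k, j)%:R * Ex (k - j) * Mo n j.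
Proof.
rewrite /Mo big_tuple_cons.
transitivity (\sum_s \sum_(j < k.+1) \sum_(t : n.-tuple S)
     'C(k, j)%:R * (q s * x s ^+ (k - j)) * (wt t * Dx t ^+ j)).
  apply: eq_bigr => s _.
  rewrite exchange_big /=; apply: eq_bigr => t _.
  rewrite wt_cons Dx_cons exprDn mulr_sumr; apply: eq_bigr => j _.
  rewrite -mulr_natl; ring.
rewrite exchange_big /=; apply: eq_bigr => j _.
rewrite /Ex mulr_sumr mulr_suml; apply: eq_bigr => s _.
by rewrite -mulr_sumr mulrA.
Qed.

Lemma Mo0 k : Mo 0 k = (k == 0)%:R.
Proof.
rewrite /Mo big_tuple0 /wt /Dx !big_ord0 mul1r.
by case: k => [|k]; rewrite ?expr0 // expr0n.
Qed.

Hypotheses (q0 : forall s, 0 <= q s) (q1 : \sum_s q s = 1)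
  (qx : \sum_s q s * x s = 0) (x1 : forall s, `|x s| <= 1).

Lemma Ex0 : Ex 0 = 1. Proof. by rewrite /Ex -[RHS]q1; apply: eq_bigr => s _; rewrite mulr1. Qed.
Lemma Ex1 : Ex 1 = 0. Proof. by rewrite /Ex -[RHS]qx; apply: eq_bigr => s _; rewrite expr1. Qed.
Lemma Ex_even k : 0 <= Ex k.*2 <= 1.
Proof.
apply/andP; split.
  by apply: sumr_ge0 => s _; rewrite mulr_ge0 // -muln2 exprM sqr_ge0.
rewrite -[X in _ <= X]q1; apply: ler_sum => s _; rewrite ler_piMr //.
apply: le_trans (ler_norm _) _.
by rewrite normrX exprn_ile1.
Qed.

Lemma wt_ge0 n (t : n.-tuple S) : 0 <= wt t.
Proof. by apply: prodr_ge0 => i _. Qed.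

Lemma Mo_rec2 n : Mo n.+1 2 = Ex 2 * Mo n 0 + 2 * Ex 1 * Mo n 1 + Mo n 2.
Proof.
rewrite Mo_rec !big_ord_recr big_ord0 /= add0r.
rewrite (_ : 'C(2,0) = 1)%N // (_ : 'C(2,1) = 2)%N // (_ : 'C(2,2) = 1)%N //.
rewrite (_ : (2 - 0 = 2)%N) // (_ : (2 - 1 = 1)%N) // subnn Ex0; ring.
Qed.

Lemma Mo_rec4 n : Mo n.+1 4 = Ex 4 * Mo n 0 + 4 * Ex 3 * Mo n 1 +
   6 * Ex 2 * Mo n 2 + 4 * Ex 1 * Mo n 3 + Mo n 4.
Proof.
rewrite Mo_rec !big_ord_recr big_ord0 /= add0r.
rewrite (_ : 'C(4,0) = 1)%N // (_ : 'C(4,1) = 4)%N // (_ : 'C(4,2) = 6)%N //.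
rewrite (_ : 'C(4,3) = 4)%N // (_ : 'C(4,4) = 1)%N //.
rewrite (_ : (4 - 0 = 4)%N) // (_ : (4 - 1 = 3)%N) // (_ : (4 - 2 = 2)%N) //.
rewrite (_ : (4 - 3 = 1)%N) // subnn Ex0; ring.
Qed.

Lemma moments n : [/\ Mo n 0 = 1, Mo n 1 = 0, 0 <= Mo n 2 <= n%:R &
   Mo n 4 <= 3 * n%:R ^+ 2].
Proof.
elim: n => [|n [h0 h1 h2 h4]].
  by rewrite !Mo0 /= expr0n /= mulr0 lexx.
have /andP[e20 e21] : 0 <= Ex 2 <= 1 := Ex_even 1.
have /andP[e40 e41] : 0 <= Ex 4 <= 1 := Ex_even 2.
move: h2 => /andP[h20 h21].
split.
- by rewrite Mo_rec big_ord_recr big_ord0 /= add0r h0 Ex0 !mul1r.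
- by rewrite Mo_rec !big_ord_recr big_ord0 /= add0r h0 h1 Ex0 Ex1; ring.
- rewrite Mo_rec2 h0 h1 Ex1 -natr1.
  apply/andP; split; lra.
- rewrite Mo_rec4 h0 h1 Ex1 -natr1.
  have : Ex 2 * Mo n 2 <= n%:R.
    by apply: le_trans (h21); rewrite ler_piMl.
  have ? : 0 <= (n%:R:R) := ler0n R n.
  nra.
Qed.
End Mom.
Section Prob.
Variables (R : realType) (d : measure_display) (T : measurableType d)
  (P : probability T R).

Lemma fiber_sum (S : finType) (f : T -> S) (Q : pred S) :
  (forall a, measurable [set om | f om = a]) ->
  measurable [set om | Q (f om)] /\
  P [set om | Q (f om)] = (\sum_(a | Q a) P [set om | f om = a])%E.
Proof.
move=> mf.
have eU : [set om | Q (f om)] = \bigcup_(a in [set a | Q a]) [set om | f om = a].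
  by apply/seteqP; split => om /=; [move=> h; exists (f om) | case=> a /= ? ->].
rewrite eU; split.
  by apply: fin_bigcup_measurable => //; exact: finite_finset.
rewrite measure_fin_bigcup //; first last.
- by move=> i j _ _ [om [/= <- <-]].
- exact: finite_finset.
rewrite (fsbigE (enum Q)) ?enum_uniq //.
- rewrite -big_enum big_seq_cond [RHS]big_seq_cond; apply: eq_bigl => a.
  case h: (a \in enum Q) => //=; rewrite mem_setE; move: h; rewrite mem_enum.
  by [].
- by move=> a /=; rewrite mem_enum.
- by move=> a /= Qa; rewrite mem_enum; rewrite unfold_in Qa.
Qed.

Variables (S : finType) (s0 : S) (A : nat -> T -> S) (q : S -> R).
Hypotheses (Ameas : forall i a, measurable [set om | A i om = a])
  (Alaw : forall i a, P [set om | A i om = a] = (q a)%:E)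
  (Aind : forall (s : seq nat) (b : nat -> S), uniq s ->
     fine (P [set om | forall i, i \in s -> A i om = b i]) =
     \prod_(i <- s) fine (P [set om | A i om = b i])).

Lemma q_ge0 a : 0 <= q a.
Proof. by rewrite -lee_fin -(Alaw 0). Qed.

Lemma q_sum1 : \sum_a q a = 1.
Proof.
have [_ h] := fiber_sum (f:=A 0) predT (Ameas 0).
move: h; rewrite (_ : [set om | predT (A 0 om)] = setT); last first.
  by apply/seteqP; split.
rewrite probability_setT.
under eq_bigr do rewrite Alaw.
by rewrite sumEFin => -[].
Qed.

Definition tup n om : n.-tuple S := [tuple A i om | i < n].

Definition tb n (t : n.-tuple S) (i : nat) : S := nth s0 t i.

Lemma cylE n (t : n.-tuple S) :
  [set om | tup n om = t] =
  [set om | forall i, i \in iota 0 n -> A i om = tb t i].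
Proof.
apply/seteqP; split => om /=.
  move=> <- i; rewrite mem_iota add0n /= /tb => hi.
  by rewrite -/(nat_of_ord (Ordinal hi)) -tnth_nth tnth_mktuple.
move=> h; apply: eq_from_tnth => i; rewrite tnth_mktuple h ?mem_iota //=.
by rewrite /tb (tnth_nth s0).
Qed.

Lemma cyl_meas n (t : n.-tuple S) : measurable [set om | tup n om = t].
Proof.
rewrite cylE.
have -> : [set om | forall i, i \in iota 0 n -> A i om = tb t i] =
  \bigcap_(i in [set i | i \in iota 0 n]) [set om | A i om = tb t i].
  by apply/seteqP; split => om /= h i; apply: h.
by apply: bigcap_measurableType => k _; exact: Ameas.
Qed.

Lemma cyl_prob n (t : n.-tuple S) :
  P [set om | tup n om = t] = (wt q t)%:E.
Proof.
have hf : P [set om | tup n om = t] \is a fin_num.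
  by rewrite ge0_fin_numE // (le_lt_trans (probability_le1 _ (cyl_meas t))) // ltry.
rewrite -(fineK hf); congr EFin.
rewrite cylE Aind ?iota_uniq //.
rewrite (_ : iota 0 n = index_iota 0 n); last by rewrite /index_iota subn0.
rewrite big_mkord /wt.
apply: eq_bigr => i _; rewrite Alaw /= /tb (tnth_nth s0) //.
Qed.

Lemma prob_tuple_event n (Q : pred (n.-tuple S)) :
  P [set om | Q (tup n om)] = (\sum_(t | Q t) wt q t)%:E.
Proof.
have [_ ->] := fiber_sum (f:=tup n) Q (@cyl_meas n).
under eq_bigr do rewrite cyl_prob.
by rewrite sumEFin.
Qed.

Lemma tup_event_meas n (Q : pred (n.-tuple S)) :
  measurable [set om | Q (tup n om)].
Proof. by have [] := fiber_sum (f:=tup n) Q (@cyl_meas n). Qed.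

Lemma dev_bound n (x : S -> R) (c : R) :
  \sum_s q s * x s = 0 -> (forall s, `|x s| <= 1) -> 0 < c ->
  (P [set om | (c < Dx x (tup n om) ^+ 4)%R] <= (3 * n%:R ^+ 2 / c)%:E)%E.
Proof.
move=> qx x1 c0.
rewrite (prob_tuple_event (fun t : n.-tuple S => (c < Dx x t ^+ 4)%R)) lee_fin.
have [_ _ _ h4] := moments q_ge0 q_sum1 qx x1 n.
apply: le_trans (_ : Mo q x n 4 / c <= _); last by rewrite ler_pM2r ?invr_gt0.
rewrite /Mo mulr_suml [X in _ <= X](bigID (fun t => c < Dx x t ^+ 4)) /=.
rewrite -[X in X <= _]addr0; apply: lerD.
  apply: ler_sum => t ct; rewrite -mulrA ler_peMr ?wt_ge0 //; first exact: q_ge0.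
  by rewrite ler_pdivlMr // mul1r ltW.
apply: sumr_ge0 => t _; apply: divr_ge0; last exact: ltW.
apply: mulr_ge0; first by apply: wt_ge0; exact: q_ge0.
by rewrite (_ : 4 = 2 * 2)%N // exprM sqr_ge0.
Qed.
End Prob.
Section SLLN.
Variables (R : realType) (d : measure_display) (T : measurableType d)
  (P : probability T R).
Variables (S : finType) (s0 : S) (A : nat -> T -> S) (q : S -> R).
Hypotheses (Ameas : forall i a, measurable [set om | A i om = a])
  (Alaw : forall i a, P [set om | A i om = a] = (q a)%:E)
  (Aind : forall (s : seq nat) (b : nat -> S), uniq s ->
     fine (P [set om | forall i, i \in s -> A i om = b i]) =
     \prod_(i <- s) fine (P [set om | A i om = b i])).

Lemma slln_k (x : S -> R) (k : nat) :
  \sum_s q s * x s = 0 -> (forall s, `|x s| <= 1) ->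
  {ae P, forall om, \forall n \near \oo,
      `|Dx x (tup A n om)| <= n%:R / k.+1%:R}.
Proof.
move=> qx x1.
pose c (j : nat) : R := (j.+1%:R / k.+1%:R) ^+ 4.
have c0 j : 0 < c j by rewrite exprn_gt0 // divr_gt0 // ltr0n.
pose F (j : nat) := [set om | (c j < Dx x (tup A j.+1 om) ^+ 4)%R].
have mF j : measurable (F j).
  exact: (tup_event_meas P s0 Ameas (fun t : j.+1.-tuple S => c j < Dx x t ^+ 4)).
have PF j : (P (F j) <= (3 * k.+1%:R ^+ 4 * (j.+1%:R ^+ 2)^-1)%:E)%E.
  apply: le_trans (dev_bound s0 Ameas Alaw Aind j.+1 qx x1 (c0 j)) _.
  rewrite lee_fin /c expr_div_n.
  have hj : (j.+1%:R : R) != 0 by rewrite pnatr_eq0.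
  have hk : (k.+1%:R : R) != 0 by rewrite pnatr_eq0.
  rewrite le_eqVlt; apply/orP; left; apply/eqP.
  rewrite (_ : 4 = 2 + 2)%N // !exprD; field.
  by apply/andP; split; apply: lt0r_neq0; move: (ler0n R j) (ler0n R k) => ? ?; lra.
have P0 : P (lim_sup_set F) = 0%E.
  apply: lim_sup_set_cvg0 => //.
  apply: (le_lt_trans (y := (3 * k.+1%:R ^+ 4 * 2)%:E)); last exact: ltry.
  apply: nneseries_bounded => [n|N]; first exact: measure_ge0.
  apply: le_trans (_ : (\sum_(n < N) (3 * k.+1%:R ^+ 4 * (n.+1%:R ^+ 2)^-1)%:E <= _)%E).
    by apply: lee_sum => n _; exact: PF.
  rewrite sumEFin lee_fin -mulr_sumr ler_wpM2l //.
  apply: le_trans (sum_inv_sq R N) _.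
  by rewrite lerBlDr lerDl mulr_ge0 // invr_ge0.
exists (lim_sup_set F); split => //.
  apply: bigcap_measurableType => n _.
  by apply: bigcup_measurable => j _; exact: mF.
move=> om /= Hom; apply: contrapT => Hnot; apply: Hom.
suff [m hm] : exists m, forall j, (m <= j)%N -> ~ F j om.
  exists m.+1 => // n /= hn.
  have hn' : n = n.-1.+1 by rewrite prednK // (leq_trans _ hn).
  have := hm n.-1; rewrite -ltnS -hn' => /(_ hn) /negP; rewrite -leNgt /c -hn'.
  move=> h; rewrite -(@ler_pXn2r _ 4) //; rewrite ?nnegrE ?divr_ge0 //.
  by rewrite (_ : 4 = 2 * 2)%N // exprM real_normK ?num_real // -exprM.
apply: contrapT => h; apply: Hnot => m _; apply: contrapT => h2; apply: h.
by exists m => j mj Fj; apply: h2; exists j.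
Qed.
End SLLN.
Section Vec.
Variable R : realType.
Variable m : nat.
Local Notation p := m.+1.
Local Notation W := (@wvec R m.+1).

Lemma indTE (a : {set 'I_p}) (v : 'cV[R]_p) :
  indT a v = \sum_(j < p) (j \in a)%:R * v j 0.
Proof. by rewrite /indT mxE; apply: eq_bigr => j _; rewrite !mxE. Qed.

Lemma wvecE_low (th : 'cV[R]_m) (i : 'I_m) :
  W th (widen_ord (leqnSn m) i) 0 = th i 0.
Proof.
rewrite /wvec !mxE /= (ltn_eqF (ltn_ord i)) add0r.
rewrite (bigD1 i) //= !mxE /= ltn_ord eqxx mul1r big1 ?addr0 // => j ji.
by rewrite !mxE /= ltn_ord (inj_eq val_inj) eq_sym (negbTE ji) mul0r.
Qed.

Lemma wvecE_max (th : 'cV[R]_m) :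
  W th ord_max 0 = 1 - \sum_(j < m) th j 0.
Proof.
rewrite /wvec !mxE /= eqxx -sumrN; congr (_ + _).
by apply: eq_bigr => j _; rewrite !mxE /= ltnn mulN1r.
Qed.

Lemma wvec_sum (th : 'cV[R]_m) : \sum_(i < p) W th i 0 = 1.
Proof.
rewrite big_ord_recr /= wvecE_max.
under eq_bigr do rewrite wvecE_low.
by rewrite addrC subrK.
Qed.

Lemma wvec_ge0 (th : 'cV[R]_m) : @Theta R m.+1 th -> forall i, 0 <= W th i 0.
Proof.
move=> [h0 h1] i.
have [im|] := ltnP i m.
  have -> : i = widen_ord (leqnSn m) (Ordinal im) by apply: val_inj.
  by rewrite wvecE_low.
move=> mi; have ei : (i : nat) = m by apply/eqP; rewrite eqn_leq mi -ltnS ltn_ord.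
have -> : i = ord_max by apply: val_inj.
by rewrite wvecE_max subr_ge0.
Qed.

Lemma indT_ge0 a (th : 'cV[R]_m) : @Theta R m.+1 th -> 0 <= indT a (W th).
Proof.
by move=> hT; rewrite indTE; apply: sumr_ge0 => j _; rewrite mulr_ge0 ?wvec_ge0.
Qed.

Lemma indT_le1 a (th : 'cV[R]_m) : @Theta R m.+1 th -> indT a (W th) <= 1.
Proof.
move=> hT; rewrite indTE -[X in _ <= X](wvec_sum th); apply: ler_sum => j _.
by rewrite ler_piMl ?wvec_ge0 //; case: (j \in a).
Qed.

Lemma design_sum (mu : {set 'I_p} -> R) (v : 'cV[R]_p) :
  conditional_design mu ->
  \sum_a mu a * indT a v = \sum_(j < p) v j 0.
Proof.
move=> [_ [_ hd]].
under eq_bigr do rewrite indTE mulr_sumr.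
rewrite exchange_big /=; apply: eq_bigr => j _.
rewrite -[RHS]mulr1 -[X in _ = _ * X](hd j) mulr_sumr [RHS]big_mkcond /=.
by apply: eq_bigr => a _; case: (j \in a); rewrite ?mul1r ?mul0r ?mulr0 // mulrC.
Qed.

Lemma indTD a (u v : 'cV[R]_p) : indT a (u + v) = indT a u + indT a v.
Proof. by rewrite /indT mulmxDr mxE. Qed.

Lemma indTB a (u v : 'cV[R]_p) : indT a (u - v) = indT a u - indT a v.
Proof. by rewrite /indT mulmxBr mxE [X in _ + X]mxE. Qed.

End Vec.
Section Small.
Variable R : realType.

Definition small k (u : nat -> 'cV[R]_k) :=
  forall e, 0 < e -> \forall n \near \oo, forall i, `|u n i 0| <= e.

Lemma small_mul k l (L : 'M[R]_(l, k)) (u : nat -> 'cV[R]_k) :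
  small u -> small (fun n => L *m u n).
Proof.
move=> su e e0.
pose K := \sum_(j < l) \sum_(i < k) `|L j i| + 1.
have K0 : 0 < K by rewrite ltr_wpDl // sumr_ge0 // => j _; rewrite sumr_ge0.
have := su (e / K) (divr_gt0 e0 K0); apply: filterS => n h j.
rewrite mxE; apply: le_trans (ler_norm_sum _ _ _) _.
apply: le_trans (_ : \sum_i `|L j i| * (e / K) <= _).
  by apply: ler_sum => i _; rewrite normrM ler_wpM2l.
rewrite -mulr_suml mulrA ler_pdivrMr // mulrC ler_wpM2l ?ltW //.
apply: le_lt_trans (_ : _ <= \sum_(j0 < l) \sum_(i < k) `|L j0 i|) _; last first.
  by rewrite ltrDl.
rewrite (bigD1 j) //= lerDl sumr_ge0 // => j0 _; by rewrite sumr_ge0.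
Qed.

Lemma small_cvg k (f : nat -> 'cV[R]_k) y :
  small (fun n => f n - y) -> f n @[n --> \oo] --> y.
Proof.
move=> sf; apply/cvgrPdist_le => e e0.
have := sf e e0; apply: filterS => n h.
rewrite -normrN opprB (_ : `|f n - y| = mx_norm (f n - y)) // mx_normrE.
apply: bigmax_le => [|[i j] _]; first exact: ltW.
by rewrite (ord1 j) !mxE /=; move: (h i); rewrite !mxE.
Qed.
End Small.
Section Lin.
Variables (R : realType) (m : nat) (mu : {set 'I_m.+1} -> R).
Local Notation N := #|{set 'I_m.+1}|.

Definition Mm : 'M[R]_(N, m) := \matrix_(i, j)
  (if 0 < mu (enum_val i) then ((ind R (enum_val i))^T *m Bmx R m.+1) 0 j else 0).

Lemma MmE (u : 'cV[R]_m) i : (Mm *m u) i 0 =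
  if 0 < mu (enum_val i) then ((ind R (enum_val i))^T *m Bmx R m.+1 *m u) 0 0
  else 0.
Proof.
rewrite !mxE; case: ifP => h.
  by apply: eq_bigr => j _; rewrite /Mm mxE h.
by rewrite big1 // => j _; rewrite /Mm mxE h mul0r.
Qed.

Lemma lin_recover : assumption1 mu -> exists L : 'M[R]_(m, N), L *m Mm = 1%:M.
Proof.
move=> ha.
have inj : forall u : 'cV[R]_m, Mm *m u = 0 -> u = 0.
  move=> u hu; apply: ha => a ma.
  move/matrixP: hu => /(_ (enum_rank a) 0).
  by rewrite MmE enum_rankK ma !mxE.
have : row_free Mm^T.
  apply: inj_row_free => v hv; apply: trmx_inj; rewrite trmx0; apply: inj.
  by rewrite -[Mm]trmxK -trmx_mul hv trmx0.
case/row_freeP => B hB; exists B^T.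
by rewrite -[Mm]trmxK -trmx_mul hB trmx1.
Qed.
End Lin.
Section Det.
Variables (R : realType) (m : nat) (mu : {set 'I_m.+1} -> R) (theta : 'cV[R]_m).
Hypotheses (hd : conditional_design mu) (hT : @Theta R m.+1 theta).
Local Notation W := (@wvec R m.+1).
Local Notation S := {set 'I_m.+1}.

Definition sT (a : S) := indT a (W theta).
Definition qq (a : S) := mu a * sT a.
Definition tt (th : 'cV[R]_m) (a : S) := Num.sqrt (indT a (W th) / sT a).
Definition Nc (As : nat -> S) n (a : S) : R := \sum_(i < n) (As i == a)%:R.

Lemma mu_ge0 a : 0 <= mu a. Proof. by case: hd. Qed.
Lemma sT_ge0 a : 0 <= sT a. Proof. exact: indT_ge0. Qed.
Lemma qq_ge0 a : 0 <= qq a. Proof. by rewrite mulr_ge0 ?mu_ge0 ?sT_ge0. Qed.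

Lemma qq_pos a : 0 < qq a -> 0 < mu a /\ 0 < sT a.
Proof.
move=> h; rewrite !lt0r mu_ge0 sT_ge0 !andbT.
by split; apply/eqP => e; move: h; rewrite /qq e ?mul0r ?mulr0 ltxx.
Qed.

Lemma sum_mu_indT (th : 'cV[R]_m) : \sum_a mu a * indT a (W th) = 1.
Proof. by rewrite design_sum // wvec_sum. Qed.

Lemma sumG_qq : \sum_(a | 0 < qq a) qq a = 1.
Proof.
rewrite -(sum_mu_indT theta) [RHS](bigID (fun a => 0 < qq a)) /= -[LHS]addr0.
congr (_ + _); apply/esym/big1 => a ha.
by apply/eqP; rewrite eq_le qq_ge0 andbT leNgt.
Qed.

Lemma eln_sum n (x : 'I_n -> R) : (forall i, 0 < x i) ->
  (\sum_(i < n) eln (x i) = (\sum_(i < n) ln (x i))%:E)%E.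
Proof.
move=> h; rewrite -sumEFin; apply: eq_bigr => i _.
by rewrite /eln h.
Qed.

Lemma eln_sum_pos n (x : 'I_n -> R) r :
  ((r%:E <= \sum_(i < n) eln (x i))%E) -> forall i, 0 < x i.
Proof.
move=> h i; apply: contraTT h => hi.
have -> : (\sum_(i < n) eln (x i) = -oo)%E.
  by apply/eqP; rewrite esum_eqNy; apply/existsP; exists i; rewrite /eln (negbTE hi).
by rewrite leNgt ltNye.
Qed.

Lemma mle_ineq (As : nat -> S) n th :
  is_mle As n th -> (forall i, 0 < qq (As i)) ->
  n%:R <= \sum_(i < n) tt th (As i).
Proof.
move=> [hTh hmax] hq.
have hs i : 0 < sT (As i) by case: (qq_pos (hq i)).
have := hmax theta hT; rewrite /loglik (eln_sum (fun i : 'I_n => hs i)) => h.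
have hsn (i : 'I_n) : 0 < indT (As i) (W th) := eln_sum_pos h i.
rewrite (eln_sum hsn) lee_fin in h.
have key (i : 'I_n) : ln (indT (As i) (W th)) - ln (sT (As i)) <= 2 * (tt th (As i) - 1).
  have hq0 : 0 < indT (As i) (W th) / sT (As i) by apply: divr_gt0; [exact: hsn | exact: hs].
  rewrite -ln_div ?posrE //.
  have ht : 0 < tt th (As i) by rewrite /tt sqrtr_gt0.
  rewrite -(sqr_sqrtr (ltW hq0)) -/(tt th (As i)) lnXn // mulr2n.
  have h1 : -1 < tt th (As i) - 1 by lra.
  have := @le_ln1Dx R (tt th (As i) - 1) h1.
  rewrite (addrC 1) subrK => h2; lra.
have : 0 <= \sum_(i < n) 2 * (tt th (As i) - 1).
  apply: le_trans (_ : 0 <= \sum_(i < n) (ln (indT (As i) (W th)) - ln (sT (As i)))) _.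
    by rewrite sumrB subr_ge0.
  by apply: ler_sum => i _; exact: key.
rewrite -mulr_sumr sumrB sumr_const card_ord => h2; lra.
Qed.

Lemma group_sum (As : nat -> S) n (g : S -> R) :
  \sum_(i < n) g (As i) = \sum_a g a * Nc As n a.
Proof.
under [RHS]eq_bigr do rewrite /Nc mulr_sumr.
rewrite exchange_big /=; apply: eq_bigr => i _.
rewrite (bigD1 (As i)) //= eqxx mulr1 big1 ?addr0 // => a ha.
by rewrite eq_sym (negbTE ha) mulr0.
Qed.

Lemma Nc_off (As : nat -> S) n a : (forall i, 0 < qq (As i)) ->
  ~~ (0 < qq a) -> Nc As n a = 0.
Proof.
move=> hq ha; rewrite /Nc big1 // => i _.
by case: eqP => // e; move: (hq i); rewrite e (negbTE ha).
Qed.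

Lemma groupG (As : nat -> S) n (g : S -> R) : (forall i, 0 < qq (As i)) ->
  \sum_(i < n) g (As i) = \sum_(a | 0 < qq a) g a * Nc As n a.
Proof.
move=> hq; rewrite (group_sum As n g) (bigID (fun a => 0 < qq a)) /= [X in _ + X]big1 ?addr0 //.
by move=> a ha; rewrite Nc_off // mulr0.
Qed.

Lemma tt_ge0 th a : 0 <= tt th a. Proof. exact: sqrtr_ge0. Qed.

Lemma tt_sq th a : @Theta R m.+1 th -> 0 < sT a -> tt th a ^+ 2 = indT a (W th) / sT a.
Proof. by move=> hTh hs; rewrite sqr_sqrtr // divr_ge0 ?indT_ge0 // ltW. Qed.

Lemma tt_le th a : @Theta R m.+1 th -> 0 < sT a -> tt th a <= 1 + (sT a)^-1.
Proof.
move=> hTh hs.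
have h1 : tt th a ^+ 2 <= (sT a)^-1.
  by rewrite tt_sq // ler_pdivrMr // mulVf ?gt_eqF // indT_le1.
have h0 := tt_ge0 th a.
move: h1; set t := tt th a; set u := (sT a)^-1 => h1; nra.
Qed.

Lemma key_ineq (As : nat -> S) n th :
  is_mle As n th -> (forall i, 0 < qq (As i)) ->
  n%:R * \sum_(a | 0 < qq a) qq a * (tt th a - 1) ^+ 2 <=
  2 * \sum_(a | 0 < qq a) `|Nc As n a - n%:R * qq a| * (1 + (sT a)^-1).
Proof.
move=> hm hq; have hTh := hm.1.
have h1 := mle_ineq hm hq; rewrite (groupG _ _ hq) in h1.
set X2 := \sum_(a | 0 < qq a) qq a * tt th a ^+ 2.
set X1 := \sum_(a | 0 < qq a) qq a * tt th a.
set Y := \sum_(a | 0 < qq a) tt th a * Nc As n a.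
have h2 : X2 <= 1.
  rewrite -(sum_mu_indT th) /X2 [X in _ <= X](bigID (fun a => 0 < qq a)) /=.
  rewrite -[X in X <= _]addr0; apply: lerD.
    apply: ler_sum => a ha; have [hm0 hs] := qq_pos ha.
    rewrite tt_sq // /qq -mulrA (mulrC (sT a)) divfK ?gt_eqF //.
  by apply: sumr_ge0 => a _; rewrite mulr_ge0 ?mu_ge0 ?indT_ge0.
have h3 := sumG_qq.
have eL : \sum_(a | 0 < qq a) qq a * (tt th a - 1) ^+ 2 =
    X2 + \sum_(a | 0 < qq a) qq a - 2 * X1.
  rewrite /X2 /X1 mulr_sumr -big_split /= -sumrB; apply: eq_bigr => a _; ring.
have eR : \sum_(a | 0 < qq a) 2 * ((Nc As n a - n%:R * qq a) * tt th a) =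
    2 * Y - 2 * n%:R * X1.
  rewrite -mulr_sumr /Y /X1 -mulrA [n%:R * _]mulr_sumr -mulrBr; congr (_ * _).
  by rewrite -sumrB; apply: eq_bigr => a _; ring.
have hR : \sum_(a | 0 < qq a) 2 * ((Nc As n a - n%:R * qq a) * tt th a) <=
    2 * \sum_(a | 0 < qq a) `|Nc As n a - n%:R * qq a| * (1 + (sT a)^-1).
  rewrite -mulr_sumr ler_wpM2l //; apply: ler_sum => a ha.
  have [_ hs] := qq_pos ha.
  apply: le_trans (ler_norm _) _; rewrite normrM (ger0_norm (tt_ge0 th a)).
  by rewrite ler_wpM2l // tt_le.
rewrite eL h3; move: hR; rewrite eR => hR.
have h4 : n%:R * X2 <= n%:R by rewrite ler_piMr.
have h5 : (0:R) <= n%:R := ler0n R n.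
rewrite -/Y in h1.
have -> : n%:R * (X2 + 1 - 2 * X1) = n%:R * X2 + n%:R - 2 * n%:R * X1 by ring.
lra.
Qed.

Lemma abs_le_sq (x e : R) : 0 <= e -> x ^+ 2 <= e ^+ 2 -> `|x| <= e.
Proof.
move=> e0 h; rewrite -(@ler_pXn2r _ 2) //; rewrite ?nnegrE //.
by rewrite real_normK ?num_real.
Qed.

Lemma det_main (As : nat -> S) (th : nat -> 'cV[R]_m) :
  (forall n, is_mle As n (th n)) -> (forall i, 0 < qq (As i)) ->
  (forall a (k : nat), \forall n \near \oo,
     `|Nc As n a - n%:R * qq a| <= n%:R / k.+1%:R) ->
  forall a, 0 < mu a -> forall e, 0 < e ->
    \forall n \near \oo, `|indT a (W (th n)) - sT a| <= e.
Proof.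
move=> hm hq hN.
pose C a := 1 + (sT a)^-1.
have C0 a : 0 <= C a by rewrite addr_ge0 // invr_ge0 sT_ge0.
pose KC := \sum_(a | 0 < qq a) C a.
have KC0 : 0 <= KC by apply: sumr_ge0 => a _.
pose X n := \sum_(a | 0 < qq a) qq a * (tt (th n) a - 1) ^+ 2.
have X0 n : 0 <= X n by apply: sumr_ge0 => a _; rewrite mulr_ge0 ?qq_ge0 ?sqr_ge0.
have D1 : forall e, 0 < e -> \forall n \near \oo, X n <= e.
  move=> e e0.
  pose k := Num.trunc (2 * KC / e).
  have hk : 2 * KC / e < k.+1%:R := truncnS_gt _.
  have hall : \forall n \near \oo, forall a,
      `|Nc As n a - n%:R * qq a| <= n%:R / k.+1%:R.
    by apply: filter_forall => a; exact: hN.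
  have hpos : \forall n \near \oo, (0 < n)%N by exists 1%N.
  apply: filterS2 hall hpos => n hn n0.
  have hkey := key_ineq (hm n) hq.
  have hb : 2 * \sum_(a | 0 < qq a) `|Nc As n a - n%:R * qq a| * (1 + (sT a)^-1)
      <= n%:R * (2 * KC / k.+1%:R).
    apply: le_trans (_ : 2 * \sum_(a | 0 < qq a) (n%:R / k.+1%:R) * C a <= _).
      by rewrite ler_wpM2l //; apply: ler_sum => a _; apply: ler_wpM2r; [exact: C0 | exact: hn].
    rewrite -mulr_sumr /KC le_eqVlt; apply/orP; left; apply/eqP; ring.
  have hX : X n <= 2 * KC / k.+1%:R.
    rewrite -(@ler_pM2l _ n%:R) ?ltr0n //.
    exact: le_trans hkey hb.
  apply: le_trans hX _.
  have k0 : (0:R) < k.+1%:R by rewrite ltr0n.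
  rewrite ler_pdivrMr // mulrC -ler_pdivrMr // ler_pdivrMr //.
  by move: hk; rewrite ltr_pdivrMr // => hk; nra.
have D2 : forall b, 0 < qq b -> forall e, 0 < e ->
    \forall n \near \oo, `|indT b (W (th n)) - sT b| <= e.
  move=> b hb e e0; have [mb sb] := qq_pos hb.
  pose Ka := sT b ^+ 2 * (2 + (sT b)^-1) ^+ 2 / qq b.
  have Ka0 : 0 < Ka.
    by rewrite divr_gt0 // mulr_gt0 ?exprn_gt0 // ltr_wpDr // invr_ge0 ltW.
  have := D1 (e ^+ 2 / Ka) (divr_gt0 (exprn_gt0 _ e0) Ka0).
  apply: filterS => n hXn.
  have hTh := (hm n).1.
  set t := tt (th n) b.
  have t0 : 0 <= t := tt_ge0 _ _.
  have tle : t <= 1 + (sT b)^-1 := tt_le hTh sb.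
  have esn : indT b (W (th n)) = sT b * t ^+ 2.
    by rewrite /t tt_sq // mulrC divfK ?gt_eqF.
  have ha : qq b * (t - 1) ^+ 2 <= X n.
    rewrite /X (bigD1 b) //= lerDl; apply: sumr_ge0 => c _.
    by rewrite mulr_ge0 ?qq_ge0 ?sqr_ge0.
  have hr : (t + 1) ^+ 2 <= (2 + (sT b)^-1) ^+ 2.
    have u0 : 0 <= (sT b)^-1 by rewrite invr_ge0 ltW.
    move: tle u0; set u := (sT b)^-1 => tle u0; nra.
  apply: abs_le_sq; first exact: ltW.
  rewrite esn.
  have -> : (sT b * t ^+ 2 - sT b) ^+ 2 = sT b ^+ 2 * (t - 1) ^+ 2 * (t + 1) ^+ 2.
    by ring.
  apply: le_trans (_ : sT b ^+ 2 * (t - 1) ^+ 2 * (2 + (sT b)^-1) ^+ 2 <= _).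
    by rewrite ler_wpM2l // mulr_ge0 ?sqr_ge0.
  apply: le_trans (_ : Ka * X n <= _); last first.
    by rewrite mulrC -ler_pdivlMr.
  apply: le_trans (_ : Ka * (qq b * (t - 1) ^+ 2) <= _); last first.
    by rewrite ler_wpM2l // ltW.
  rewrite /Ka le_eqVlt; apply/orP; left; apply/eqP.
  by field; rewrite !gt_eqF.
move=> a ma e e0.
case: (boolP (0 < qq a)) => [ha|ha]; first exact: D2.
have sa : sT a = 0.
  apply/eqP; rewrite eq_le sT_ge0 andbT.
  by move: ha; rewrite /qq -leNgt pmulr_rle0.
pose M := \sum_(b | 0 < qq b) mu b.
have M0 : 0 <= M by apply: sumr_ge0 => b _; exact: mu_ge0.
pose e' := e * mu a / (M + 1).
have e'0 : 0 < e' by rewrite divr_gt0 ?mulr_gt0 // ltr_wpDl.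
have hall : \forall n \near \oo, forall b,
    0 < qq b -> `|indT b (W (th n)) - sT b| <= e'.
  apply: filter_forall => b.
  case: (boolP (0 < qq b)) => hb; last by apply: nearW => n.
  by apply: filterS (D2 b hb e' e'0) => n h.
apply: filterS hall => n hn.
have hTh := (hm n).1.
rewrite sa subr0 ger0_norm ?indT_ge0 //.
have h1 : mu a * indT a (W (th n)) <= M * e'.
  apply: le_trans (_ : \sum_(b | ~~ (0 < qq b)) mu b * indT b (W (th n)) <= _).
    rewrite (bigD1 a) //= lerDl; apply: sumr_ge0 => c _.
    by rewrite mulr_ge0 ?mu_ge0 ?indT_ge0.
  have e1 := sum_mu_indT (th n).
  rewrite (bigID (fun b => 0 < qq b)) /= in e1.
  have e2 := sumG_qq.
  have -> : \sum_(b | ~~ (0 < qq b)) mu b * indT b (W (th n)) =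
      \sum_(b | 0 < qq b) (qq b - mu b * indT b (W (th n))).
    rewrite sumrB e2; move: e1 => e1; lra.
  rewrite /M mulr_suml; apply: ler_sum => b hb.
  rewrite /qq -mulrBr ler_wpM2l ?mu_ge0 //.
  apply: le_trans (hn b hb); rewrite -normrN opprB; exact: ler_norm.
have hMe : M * e' <= e * mu a.
  rewrite /e'; have z0 : 0 <= e * mu a by rewrite mulr_ge0 ?ltW.
  move: z0; set z := e * mu a => z0.
  rewrite mulrA ler_pdivrMr ?ltr_wpDl //; nra.
rewrite -(@ler_pM2l _ (mu a)) // (mulrC _ e).
exact: le_trans h1 hMe.
Qed.
End Det.
Section Conv.
Variables (R : realType) (m : nat) (mu : {set 'I_m.+1} -> R) (theta : 'cV[R]_m).
Hypotheses (hd : conditional_design mu) (ha1 : assumption1 mu)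
  (hT : @Theta R m.+1 theta).
Local Notation W := (@wvec R m.+1).
Local Notation S := {set 'I_m.+1}.

Lemma Wdiff (u v : 'cV[R]_m) : W u - W v = Bmx R m.+1 *m (u - v).
Proof. by rewrite /wvec mulmxBr opprD addrACA subrr add0r. Qed.

Lemma det_conv (As : nat -> S) (th : nat -> 'cV[R]_m) :
  (forall n, is_mle As n (th n)) -> (forall i, 0 < qq mu theta (As i)) ->
  (forall a (k : nat), \forall n \near \oo,
     `|Nc R As n a - n%:R * qq mu theta a| <= n%:R / k.+1%:R) ->
  (th n @[n --> \oo] --> theta) /\ (W (th n) @[n --> \oo] --> W theta).
Proof.
move=> hm hq hN.
have hD := det_main hd hT hm hq hN.
have [L hL] := lin_recover ha1.
have sM : small (fun n => Mm mu *m (th n - theta)).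
  move=> e e0; apply: filter_forall => i.
  case: (boolP (0 < mu (enum_val i))) => hmu; last first.
    by apply: nearW => n; rewrite MmE (negbTE hmu) normr0 ltW.
  apply: filterS (hD _ hmu e e0) => n h.
  by rewrite MmE hmu -mulmxA -Wdiff -/(indT _ _) indTB.
have st : small (fun n => th n - theta).
  have := small_mul L sM.
  by under eq_fun do rewrite mulmxA hL mul1mx.
split; apply: small_cvg => //.
under eq_fun do rewrite Wdiff.
exact: small_mul.
Qed.
End Conv.

Unset Implicit Arguments.
Theorem mainTheorem4 (R : realType) (d : measure_display) (T : measurableType d)
  (P : probability T R) (p : nat) (mu : {set 'I_p} -> R)
  (theta : 'cV[R]_p.-1) (A : nat -> T -> {set 'I_p})
  (theta_hat : nat -> T -> 'cV[R]_p.-1) :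
  (4 <= p)%N ->
  conditional_design mu ->
  assumption1 mu ->
  Theta theta ->
  iid_subsets P A (law_A mu (wvec theta)) ->
  (forall n om, is_mle (fun i => A i om) n (theta_hat n om)) ->
  {ae P, forall om,
     (theta_hat n om @[n --> \oo] --> theta) /\
     (wvec (theta_hat n om) @[n --> \oo] --> wvec theta)}.
Proof.
case: p mu theta A theta_hat => [//|m] mu theta A theta_hat _ hd ha1 hT
  [Ameas [Alaw Aind]] hmle.
pose q := qq mu theta.
have Alaw' : forall i a, P [set om | A i om = a] = (q a)%:E by exact: Alaw.
have q0 a : 0 <= q a := q_ge0 Alaw' a.
have q1 : \sum_a q a = 1 := q_sum1 Ameas Alaw'.
have qle1 a : q a <= 1.
  by rewrite -q1 (bigD1 a) //= lerDl sumr_ge0.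
pose xa (a s : {set 'I_m.+1}) : R := (s == a)%:R - q a.
have qx a : \sum_s q s * xa a s = 0.
  under eq_bigr do rewrite /xa mulrBr.
  rewrite sumrB -mulr_suml q1 mul1r (bigD1 a) //= eqxx mulr1 big1 ?addr0 ?subrr //.
  by move=> s hs; rewrite (negbTE hs) mulr0.
have x1 a s : `|xa a s| <= 1.
  rewrite /xa; case: eqP => _.
    by rewrite ger0_norm ?subr_ge0 // lerBlDr lerDl.
  by rewrite sub0r normrN ger0_norm.
have E1 : {ae P, forall om, forall a (k : nat), \forall n \near \oo,
   `|Nc R (fun i => A i om) n a - n%:R * q a| <= n%:R / k.+1%:R}.
  apply: filter_forall => a; apply: ae_foralln => k.
  apply: filterS (slln_k a Ameas Alaw' Aind k (qx a) (x1 a)) => om.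
  apply: filterS => n.
  congr (_ <= _); congr `|_|.
  rewrite /Dx /Nc /xa sumrB sumr_const card_ord mulr_natl.
  by congr (_ - _); apply: eq_bigr => i _; rewrite tnth_mktuple.
have E2 : {ae P, forall om, forall i, 0 < q (A i om)}.
  apply: ae_foralln => i.
  have [mN PN] := fiber_sum P (fun a => ~~ (0 < q a)) (Ameas i).
  exists [set om | ~~ (0 < q (A i om))]; split => //.
    transitivity (\sum_(a | ~~ (0 < q a)%R) P [set om | A i om = a])%E; first exact: PN.
    rewrite big1 // => a ha; rewrite Alaw'.
    by congr EFin; apply/eqP; rewrite eq_le q0 andbT leNgt.
  by move=> om /= h; apply/negP.
apply: filterS2 E1 E2 => om h1 h2.
exact: (det_conv hd ha1 hT (hmle ^~ om) h2 h1).
Qed.
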